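(* Let $V$ be a Möbius MOSVA and $(W,Y_W^L,\rho_W)$ a Möbius left $V$-module. For every $n\ge1$, $u_1,\dots,u_n\in V$, $w\in W$, $w'\in W'$, the series $\langle w',Y_W^o(u_n,z_n)\cdots Y_W^o(u_1,z_1)w\rangle$ converges absolutely when $|z_1|>\cdots>|z_n|>0$ to a rational function with the only possible poles at $z_i=0$ ($i=1,\dots,n$) and $z_i=z_j$ ($1\le i<j\le n$).
   Context: Conventions: $x$ formal variable, $z$'s complex; products of vertex operators paired with a dual vector denote the multiple complex series of coefficients times monomials. A meromorphic open-string vertex algebra (MOSVA) is a $\mathbb Z$-graded vector space $V=\coprod_{n\in\mathbb Z}V_{(n)}$ with a linear map $Y_V:V\otimes V\to V[[x,x^{-1}]]$ and a vacuum $\mathbf 1\in V$ such that: (i) $V_{(n)}=0$ for $n$ sufficiently negative; with $\mathbf d_Vv=nv$ for $v\in V_{(n)}$, $[\mathbf d_V,Y_V(v,x)]=x\frac{d}{dx}Y_V(v,x)+Y_V(\mathbf d_Vv,x)$; (ii) $Y_V(\mathbf 1,x)=1_V$, $Y_V(u,x)\mathbf 1\in V[[x]]$ and $\lim_{x\to0}Y_V(u,x)\mathbf 1=u$; (iii) with $D_Vv=\lim_{x\to0}\frac{d}{dx}Y_V(v,x)\mathbf 1$, $\frac{d}{dx}Y_V(v,x)=Y_V(D_Vv,x)=[D_V,Y_V(v,x)]$; (iv) rationality: with $V'=\coprod_nV_{(n)}^*$, for all $u_1,\dots,u_n,v\in V$, $v'\in V'$, $\langle v',Y_V(u_1,z_1)\cdots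 Y_V(u_n,z_n)v\rangle$ converges absolutely for $|z_1|>\cdots>|z_n|>0$ to a rational function with only possible poles at $z_i=0$, $z_i=z_j$ ($i\ne j$), and $\langle v',Y_V(Y_V(u_1,z_1-z_2)u_2,z_2)v\rangle$ converges absolutely for $|z_2|>|z_1-z_2|>0$ to a rational function with only possible poles at $z_1=0,z_2=0,z_1=z_2$; (v) associativity: these two agree for $|z_1|>|z_2|>|z_1-z_2|>0$. A Möbius MOSVA is a MOSVA with a representation $\rho_V$ of $\mathfrak{sl}(2)$ (basis $L_{-1},L_0,L_1$, $[L_0,L_{\pm1}]=\mp L_{\pm1}$, $[L_{-1},L_1]=-2L_0$) with $L_V(0)=\rho_V(L_0)=\mathbf d_V$, $L_V(-1)=\rho_V(L_{-1})=D_V$, $L_V(1)=\rho_V(L_1)$, and $[L_V(1),Y_V(u,x)]=Y_V(L_V(1)u,x)+2xY_V(L_V(0)u,x)+x^2Y_V(L_V(-1)u,x)$ for $u\in V$. ($L_V(1)$ lowers weight by $1$ and is locally nilpotent.) A left $V$-module is a $\mathbb C$-graded vector space $W=\coprod_{m\in\mathbb C}W_{[m]}$ with a linear map $Y_W^L:V\otimes W\to W[[x,x^{-1}]]$, an operator $\mathbf d_W$ of weight $0$ and an operator $D_W$ of weight $1$ such that: (i) $W_{[m]}=0$ when $\mathrm{Re}(m)$ is sufficiently negative; $\mathbf d_Ww=mw$ for $w\in W_{[m]}$; $[\mathbf d_W,Y_W^L(u,x)]=Y_W^L(\mathbf d_Vu,x)+x\frac{d}{dx}Y_W^L(u,x)$;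 (ii) $Y_W^L(\mathbf 1,x)=1_W$; (iii) $\frac{d}{dx}Y_W^L(u,x)=Y_W^L(D_Vu,x)=[D_W,Y_W^L(u,x)]$; (iv) rationality: with $W'=\coprod_mW_{[m]}^*$, for $u_1,\dots,u_n\in V$, $w\in W$, $w'\in W'$, $\langle w',Y_W^L(u_1,z_1)\cdots Y_W^L(u_n,z_n)w\rangle$ converges absolutely for $|z_1|>\cdots>|z_n|>0$ to a rational function with only possible poles at $z_i=0$ and $z_i=z_j$ ($i\neq j$), and $\langle w',Y_W^L(Y_V(u_1,z_1-z_2)u_2,z_2)w\rangle$ converges absolutely for $|z_2|>|z_1-z_2|>0$ to a rational function with only possible poles at $z_1=0,z_2=0,z_1=z_2$; (v) associativity: $\langle w',Y_W^L(u_1,z_1)Y_W^L(u_2,z_2)w\rangle=\langle w',Y_W^L(Y_V(u_1,z_1-z_2)u_2,z_2)w\rangle$ for $|z_1|>|z_2|>|z_1-z_2|>0$. A Möbius left $V$-module $(W,Y_W^L,\rho_W)$ is a left $V$-module with a representation $\rho_W$ of $\mathfrak{sl}(2)$ on $W$ with $L_W(j)=\rho_W(L_j)$, $L_W(-1)=D_W$, such that for $u\in V$: $[L_W(0),Y_W^L(u,x)]=Y_W^L(L_V(0)u,x)+xY_W^L(L_V(-1)u,x)$, $[L_W(1),Y_W^L(u,x)]=Y_W^L(L_V(1)u,x)+2xY_W^L(L_V(0)u,x)+x^2Y_W^L(L_V(-1)u,x)$, and for every $w\in W_{[n]}$ there is $m\in\mathbb N$ with $(L_W(0)-n)^mw=0$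 (so $\mathbf d_W$ is the semisimple part of $L_W(0)$). The opposite vertex operator is $Y_W^o(u,x)=Y_W^L(e^{xL_V(1)}(-x^{-2})^{L_V(0)}u,x^{-1})$; for homogeneous $u$ this equals $\sum_{m\ge0}\frac{(-1)^{\mathrm{wt}\,u}}{m!}x^{m-2\mathrm{wt}\,u}Y_W^L(L_V(1)^mu,x^{-1})$, a finite sum. *)

(* Defs.v *)
From Stdlib Require Import Reals ZArith List.
Import ListNotations.
Open Scope R_scope.

Definition CC : Type := (R * R)%type.
Definition RtoC (r : R) : CC := (r, 0).
Definition C0 : CC := (0, 0).
Definition C1 : CC := (1, 0).
Definition Cre (z : CC) : R := fst z.
Definition Cim (z : CC) : R := snd z.
Definition Cadd (a b : CC) : CC := (fst a + fst b, snd a + snd b).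
Definition Copp (a : CC) : CC := (- fst a, - snd a).
Definition Csub (a b : CC) : CC := Cadd a (Copp b).
Definition Cmul (a b : CC) : CC :=
  (fst a * fst b - snd a * snd b, fst a * snd b + snd a * fst b).
Definition Cnorm (a : CC) : R := sqrt (fst a * fst a + snd a * snd a).
Definition Cinv (a : CC) : CC :=
  let d := fst a * fst a + snd a * snd a in (fst a / d, - snd a / d).
Definition Cdiv (a b : CC) : CC := Cmul a (Cinv b).
Fixpoint Cpow (z : CC) (n : nat) : CC :=
  match n with O => C1 | S m => Cmul z (Cpow z m) end.
Definition Cpowz (z : CC) (k : Z) : CC :=
  match k with
  | Z0 => C1
  | Zpos p => Cpow z (Pos.to_nat p)
  | Zneg p => Cpow (Cinv z) (Pos.to_nat p)
  end.
Definition IZC (k : Z) : CC := RtoC (IZR k).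
Definition sumC (l : list CC) : CC := fold_right Cadd C0 l.
Definition prodC (l : list CC) : CC := fold_right Cmul C1 l.
Definition sumR (l : list R) : R := fold_right Rplus 0 l.

(* (unordered absolute summability over Z^n)                           *)

Definition idx_ok (n : nat) (F : list (list Z)) : Prop :=
  NoDup F /\ Forall (fun k => length k = n) F.

Definition abs_summable_to (n : nat) (a : list Z -> CC) (S : CC) : Prop :=
  (exists M : R, forall F, idx_ok n F -> sumR (map (fun k => Cnorm (a k)) F) <= M) /\
  (forall eps : R, 0 < eps -> exists F0, idx_ok n F0 /\
     forall F, idx_ok n F -> incl F0 F -> Cnorm (Csub (sumC (map a F)) S) < eps).

Fixpoint monom (z : list CC) (k : list Z) : CC :=
  match z, k with
  | z0 :: z', k0 :: k' => Cmul (Cpowz z0 k0) (monom z' k')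
  | _, _ => C1
  end.

Definition mseries_conv (n : nat) (c : list Z -> CC) (z : list CC) (S : CC) : Prop :=
  abs_summable_to n (fun k => Cmul (c k) (monom z k)) S.

(* Rational functions in z_1..z_n whose only possible poles are at     *)
(* z_i = 0 and z_i = z_j (i < j): elements of                          *)
(* CC[z_1..z_n][z_i^{-1}, (z_i - z_j)^{-1}]                             *)

Definition zz (z : list CC) (i : nat) : CC := nth i z C0.

(* polynomials in n variables: finite lists of (coefficient, exponent vector) *)
Definition mpoly : Type := list (CC * list nat).
Fixpoint monom_nat (z : list CC) (e : list nat) : CC :=
  match z, e with
  | z0 :: z', e0 :: e' => Cmul (Cpow z0 e0) (monom_nat z' e')
  | _, _ => C1
  end.
Definition peval (P : mpoly) (z : list CC) : CC :=
  sumC (map (fun t => Cmul (fst t) (monom_nat z (snd t))) P).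

Definition pairs_lt (n : nat) : list (nat * nat) :=
  flat_map (fun i => map (fun j => (i, j)) (seq (S i) (n - S i))) (seq 0 n).

Definition pole_den (n N : nat) (z : list CC) : CC :=
  Cmul (prodC (map (fun i => Cpow (zz z i) N) (seq 0 n)))
       (prodC (map (fun ij => Cpow (Csub (zz z (fst ij)) (zz z (snd ij))) N) (pairs_lt n))).

Definition off_poles (n : nat) (z : list CC) : Prop :=
  length z = n /\
  (forall i, (i < n)%nat -> zz z i <> C0) /\
  (forall i j, (i < j)%nat -> (j < n)%nat -> zz z i <> zz z j).

Definition rational_poles (n : nat) (f : list CC -> CC) : Prop :=
  exists (P : mpoly) (N : nat),
    forall z, off_poles n z -> f z = Cdiv (peval P z) (pole_den n N z).

Definition dec_region (n : nat) (z : list CC) : Prop :=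
  length z = n /\
  (forall i, (i < n)%nat -> 0 < Cnorm (zz z i)) /\
  (forall i, (S i < n)%nat -> Cnorm (zz z (S i)) < Cnorm (zz z i)).

Record VS := {
  vcar :> Type;
  vzero : vcar;
  vadd : vcar -> vcar -> vcar;
  vopp : vcar -> vcar;
  vscal : CC -> vcar -> vcar;
  vaddA : forall x y z, vadd x (vadd y z) = vadd (vadd x y) z;
  vaddC : forall x y, vadd x y = vadd y x;
  vadd0 : forall x, vadd vzero x = x;
  vaddN : forall x, vadd (vopp x) x = vzero;
  vscal1 : forall x, vscal C1 x = x;
  vscalA : forall a b x, vscal a (vscal b x) = vscal (Cmul a b) x;
  vscalDv : forall a x y, vscal a (vadd x y) = vadd (vscal a x) (vscal a y);
  vscalDs : forall a b x, vscal (Cadd a b) x = vadd (vscal a x) (vscal b x)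
}.
Arguments vzero {_}.
Arguments vadd {_} _ _.
Arguments vopp {_} _.
Arguments vscal {_} _ _.

Definition vsub {V : VS} (x y : V) : V := vadd x (vopp y).
Definition vsum {V : VS} (l : list V) : V := fold_right vadd vzero l.

Definition linear {V W : VS} (f : V -> W) : Prop :=
  (forall x y, f (vadd x y) = vadd (f x) (f y)) /\
  (forall a x, f (vscal a x) = vscal a (f x)).

Definition linearC {V : VS} (f : V -> CC) : Prop :=
  (forall x y, f (vadd x y) = Cadd (f x) (f y)) /\
  (forall a x, f (vscal a x) = Cmul a (f x)).

(* Graded vector spaces  V = coprod_{i in I} V_(i), given by the        *)
(* family of projections onto the homogeneous components               *)

Record graded (I : Type) (V : VS) := {
  proj : I -> V -> V;
  supp : V -> list I;
  proj_lin : forall i, linear (proj i);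
  proj_idem : forall i v, proj i (proj i v) = proj i v;
  proj_orth : forall i j v, i <> j -> proj i (proj j v) = vzero;
  supp_nodup : forall v, NoDup (supp v);
  supp_spec : forall i v, ~ In i (supp v) -> proj i v = vzero;
  decomp : forall v, v = vsum (map (fun i => proj i v) (supp v))
}.
Arguments proj {_ _} _ _ _.
Arguments supp {_ _} _ _.

Definition homog {I} {V : VS} (g : graded I V) (i : I) (v : V) : Prop := proj g i v = v.

(* graded dual V' = coprod_i V_(i)^* : linear functionals vanishing on all but
   finitely many homogeneous components *)
Definition gdual {I} {V : VS} (g : graded I V) (f : V -> CC) : Prop :=
  linearC f /\ exists l : list I, forall i v, ~ In i l -> f (proj g i v) = C0.

(* MOSVAs.  A vertex operator Y(u,x)v in V[[x,x^{-1}]] is encoded by    *)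
(* its coefficients:  Y u v k = coefficient of x^k.                    *)

Record mosva_data := {
  mV : VS;
  mgr : graded Z mV;
  mlow : Z;                         (* V_(n) = 0 for n < mlow *)
  mY : mV -> mV -> Z -> mV;
  mvac : mV;
  mL_m1 : mV -> mV;
  mL_0 : mV -> mV;
  mL_1 : mV -> mV
}.

Definition dV (V : mosva_data) (v : mV V) : mV V :=
  vsum (map (fun n => vscal (IZC n) (proj (mgr V) n v)) (supp (mgr V) v)).

(* D_V v = lim_{x->0} d/dx Y(v,x)1 = coefficient of x^1 in Y(v,x)1 *)
Definition DV (V : mosva_data) (v : mV V) : mV V := mY V v (mvac V) 1%Z.

(* Y(u_1,z_1) ... Y(u_n,z_n) v : coefficient of z_1^{k_1} ... z_n^{k_n} *)
Fixpoint prodY {V : VS} {A : VS} (Y : A -> V -> Z -> V) (us : list A) (ks : list Z) (v : V) : V :=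
  match us, ks with
  | u :: us', k :: ks' => Y u (prodY Y us' ks' v) k
  | _, _ => v
  end.

Definition is_MOSVA (V : mosva_data) : Prop :=
  let Y := mY V in let g := mgr V in let one := mvac V in
  (forall v k, linear (fun u => Y u v k)) /\
  (forall u k, linear (fun v => Y u v k)) /\
  (forall n v, (n < mlow V)%Z -> proj g n v = vzero) /\
  (* (i) [d_V, Y(v,x)] = x d/dx Y(v,x) + Y(d_V v, x) *)
  (forall u v k, vsub (dV V (Y u v k)) (Y u (dV V v) k)
                 = vadd (vscal (IZC k) (Y u v k)) (Y (dV V u) v k)) /\
  (forall v k, Y one v k = if Z.eqb k 0 then v else vzero) /\
  (forall u k, (k < 0)%Z -> Y u one k = vzero) /\
  (forall u, Y u one 0%Z = u) /\
  (forall u v k, vscal (IZC (k + 1)%Z) (Y u v (k + 1)%Z) = Y (DV V u) v k) /\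
  (forall u v k, vsub (DV V (Y u v k)) (Y u (DV V v) k) = Y (DV V u) v k) /\
  (forall (us : list (mV V)) (v : mV V) (v' : mV V -> CC), (1 <= length us)%nat -> gdual g v' ->
     exists f, rational_poles (length us) f /\
       forall z, dec_region (length us) z ->
         mseries_conv (length us) (fun ks => v' (prodY Y us ks v)) z (f z)) /\
  (forall (u1 u2 v : mV V) (v' : mV V -> CC), gdual g v' ->
     exists f, rational_poles 2 f /\
       forall z1 z2, 0 < Cnorm (Csub z1 z2) -> Cnorm (Csub z1 z2) < Cnorm z2 ->
         mseries_conv 2 (fun ks => v' (Y (Y u1 u2 (nth 0 ks 0%Z)) v (nth 1 ks 0%Z)))
           [Csub z1 z2; z2] (f [z1; z2])) /\
  (forall (u1 u2 v : mV V) (v' : mV V -> CC), gdual g v' ->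
     forall z1 z2 S1 S2,
       Cnorm z2 < Cnorm z1 -> 0 < Cnorm (Csub z1 z2) -> Cnorm (Csub z1 z2) < Cnorm z2 ->
       mseries_conv 2 (fun ks => v' (prodY Y [u1; u2] ks v)) [z1; z2] S1 ->
       mseries_conv 2 (fun ks => v' (Y (Y u1 u2 (nth 0 ks 0%Z)) v (nth 1 ks 0%Z)))
           [Csub z1 z2; z2] S2 ->
       S1 = S2).

Definition sl2_rep {V : VS} (Lm1 L0 L1 : V -> V) : Prop :=
  linear Lm1 /\ linear L0 /\ linear L1 /\
  (forall v, vsub (L0 (Lm1 v)) (Lm1 (L0 v)) = Lm1 v) /\
  (forall v, vsub (L0 (L1 v)) (L1 (L0 v)) = vopp (L1 v)) /\
  (forall v, vsub (Lm1 (L1 v)) (L1 (Lm1 v)) = vscal (RtoC (-2)) (L0 v)).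

Definition is_Mobius_MOSVA (V : mosva_data) : Prop :=
  is_MOSVA V /\
  sl2_rep (mL_m1 V) (mL_0 V) (mL_1 V) /\
  (forall v, mL_0 V v = dV V v) /\
  (forall v, mL_m1 V v = DV V v) /\
  (* [L_V(1), Y(u,x)] = Y(L(1)u,x) + 2x Y(L(0)u,x) + x^2 Y(L(-1)u,x) *)
  (forall u v k, vsub (mL_1 V (mY V u v k)) (mY V u (mL_1 V v) k)
     = vadd (mY V (mL_1 V u) v k)
         (vadd (vscal (RtoC 2) (mY V (mL_0 V u) v (k - 1)%Z))
               (mY V (mL_m1 V u) v (k - 2)%Z))).

Record lmod_data (V : mosva_data) := {
  wW : VS;
  wgr : graded CC wW;
  wY : mV V -> wW -> Z -> wW;        (* Y_W^L, coefficient of x^k *)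
  wd : wW -> wW;
  wD : wW -> wW;
  wL_m1 : wW -> wW;
  wL_0 : wW -> wW;
  wL_1 : wW -> wW
}.
Arguments wW {_} _.
Arguments wgr {_} _.
Arguments wY {_} _ _ _ _.
Arguments wd {_} _ _.
Arguments wD {_} _ _.
Arguments wL_m1 {_} _ _.
Arguments wL_0 {_} _ _.
Arguments wL_1 {_} _ _.

Definition is_left_module (V : mosva_data) (W : lmod_data V) : Prop :=
  let Y := wY W in let g := wgr W in
  (forall w k, linear (fun u => Y u w k)) /\
  (forall u k, linear (fun w => Y u w k)) /\
  linear (wd W) /\ linear (wD W) /\
  (forall m w, homog g m w -> homog g m (wd W w)) /\
  (forall m w, homog g m w -> homog g (Cadd m C1) (wD W w)) /\
  (exists N : R, forall m w, Cre m < N -> proj g m w = vzero) /\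
  (forall m w, homog g m w -> wd W w = vscal m w) /\
  (forall u w k, vsub (wd W (Y u w k)) (Y u (wd W w) k)
                 = vadd (Y (dV V u) w k) (vscal (IZC k) (Y u w k))) /\
  (forall w k, Y (mvac V) w k = if Z.eqb k 0 then w else vzero) /\
  (forall u w k, vscal (IZC (k + 1)%Z) (Y u w (k + 1)%Z) = Y (DV V u) w k) /\
  (forall u w k, vsub (wD W (Y u w k)) (Y u (wD W w) k) = Y (DV V u) w k) /\
  (forall (us : list (mV V)) (w : wW W) (w' : wW W -> CC), (1 <= length us)%nat -> gdual g w' ->
     exists f, rational_poles (length us) f /\
       forall z, dec_region (length us) z ->
         mseries_conv (length us) (fun ks => w' (prodY Y us ks w)) z (f z)) /\
  (forall (u1 u2 : mV V) (w : wW W) (w' : wW W -> CC), gdual g w' ->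
     exists f, rational_poles 2 f /\
       forall z1 z2, 0 < Cnorm (Csub z1 z2) -> Cnorm (Csub z1 z2) < Cnorm z2 ->
         mseries_conv 2 (fun ks => w' (Y (mY V u1 u2 (nth 0 ks 0%Z)) w (nth 1 ks 0%Z)))
           [Csub z1 z2; z2] (f [z1; z2])) /\
  (forall (u1 u2 : mV V) (w : wW W) (w' : wW W -> CC), gdual g w' ->
     forall z1 z2 S1 S2,
       Cnorm z2 < Cnorm z1 -> 0 < Cnorm (Csub z1 z2) -> Cnorm (Csub z1 z2) < Cnorm z2 ->
       mseries_conv 2 (fun ks => w' (prodY Y [u1; u2] ks w)) [z1; z2] S1 ->
       mseries_conv 2 (fun ks => w' (Y (mY V u1 u2 (nth 0 ks 0%Z)) w (nth 1 ks 0%Z)))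
           [Csub z1 z2; z2] S2 ->
       S1 = S2).

Definition is_Mobius_left_module (V : mosva_data) (W : lmod_data V) : Prop :=
  is_left_module V W /\
  sl2_rep (wL_m1 W) (wL_0 W) (wL_1 W) /\
  (forall w, wL_m1 W w = wD W w) /\
  (forall u w k, vsub (wL_0 W (wY W u w k)) (wY W u (wL_0 W w) k)
     = vadd (wY W (mL_0 V u) w k) (wY W (mL_m1 V u) w (k - 1)%Z)) /\
  (forall u w k, vsub (wL_1 W (wY W u w k)) (wY W u (wL_1 W w) k)
     = vadd (wY W (mL_1 V u) w k)
         (vadd (vscal (RtoC 2) (wY W (mL_0 V u) w (k - 1)%Z))
               (wY W (mL_m1 V u) w (k - 2)%Z))) /\
  (forall (n : CC) w, homog (wgr W) n w ->
     exists m : nat, Nat.iter m (fun x => vsub (wL_0 W x) (vscal n x)) w = vzero).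

(*   Y_W^o(u,x) = Y_W^L(e^{x L_V(1)} (-x^{-2})^{L_V(0)} u, x^{-1})       *)
(* For u of weight p this is                                           *)
(*   sum_{m>=0} (-1)^p/m! x^{m-2p} Y_W^L(L_V(1)^m u, x^{-1}),            *)
(* the sum being finite: L_V(1)^m u has weight p-m, so vanishes for    *)
(* m > p - mlow.  General u is split into homogeneous components.      *)
(* Yo u w k = coefficient of x^k in Y_W^o(u,x)w.                        *)

Definition signZ (p : Z) : CC := if Z.even p then C1 else RtoC (-1).

Definition Yo (V : mosva_data) (W : lmod_data V) (u : mV V) (w : wW W) (k : Z) : wW W :=
  vsum (flat_map (fun p =>
          map (fun m =>
                 vscal (Cmul (signZ p) (RtoC (/ INR (fact m))))
                   (wY W (Nat.iter m (mL_1 V) (proj (mgr V) p u)) w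
                      (- (k - Z.of_nat m + 2 * p))%Z))
              (seq 0 (S (Z.to_nat (p - mlow V)))))
        (supp (mgr V) u)).

(* Y_W^o(u_n,z_n) ... Y_W^o(u_1,z_1) w, for us = [u_1; ...; u_n]:
   coefficient of z_1^{k_1} ... z_n^{k_n}, ks = [k_1; ...; k_n] *)
Fixpoint prodYo_rev (V : mosva_data) (W : lmod_data V)
    (us : list (mV V)) (ks : list Z) (w : wW W) : wW W :=
  match us, ks with
  | u :: us', k :: ks' => prodYo_rev V W us' ks' (Yo V W u w k)
  | _, _ => w
  end.

(* Main.v *)
Require Import Defs.
From Stdlib Require Import Reals ZArith List.
From Stdlib Require Import Lra Lia Psatz Permutation.
From Coquelicot Require Complex.
Require Import Defs.
Import ListNotations.
Open Scope R_scope.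

Lemma CC_ext (a b : CC) : fst a = fst b -> snd a = snd b -> a = b.
Proof. destruct a, b; simpl; intros; subst; reflexivity. Qed.

Lemma CC_ring : ring_theory C0 C1 Cadd Cmul Csub Copp (@eq CC).
Proof.
  constructor; intros; apply CC_ext;
  repeat match goal with x : CC |- _ => destruct x end;
  unfold C0, C1, Cadd, Cmul, Csub, Copp; simpl; ring.
Qed.
Add Ring CCring : CC_ring.

Lemma CC_neq0 (x : CC) : x <> C0 -> fst x * fst x + snd x * snd x <> 0.
Proof.
  destruct x as [a b]; simpl; intros H Hd. apply H.
  assert (a = 0) by nra. assert (b = 0) by nra. subst. reflexivity.
Qed.

Lemma CC_field : field_theory C0 C1 Cadd Cmul Csub Copp Cdiv Cinv (@eq CC).
Proof.
  constructor.
  - exact CC_ring.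
  - unfold C0, C1; intro H; injection H; lra.
  - reflexivity.
  - intros x Hx. pose proof (CC_neq0 x Hx) as Hd.
    destruct x as [a b]; simpl in *; apply CC_ext; unfold Cmul, Cinv, C1; simpl;
    field; auto.
Qed.
Add Field CCfield : CC_field.

Lemma Cinv_C0 : Cinv C0 = C0.
Proof. apply CC_ext; unfold Cinv, C0; simpl; unfold Rdiv; rewrite ?Rmult_0_l; ring. Qed.


Lemma C1_nz : C1 <> C0.
Proof. unfold C0, C1; intro H; injection H; lra. Qed.

Lemma CC_dec (a b : CC) : {a = b} + {a <> b}.
Proof.
  destruct a as [a1 a2], b as [b1 b2].
  destruct (Req_EM_T a1 b1); destruct (Req_EM_T a2 b2); subst; auto;
  right; intro H; injection H; auto.
Qed.

Lemma Cmul_integral a b : Cmul a b = C0 -> a = C0 \/ b = C0.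
Proof.
  intro H. destruct (CC_dec a C0) as [|Ha]; auto. right.
  replace b with (Cmul (Cinv a) (Cmul a b)) by (field; auto).
  rewrite H. ring.
Qed.

Lemma Cmul_nz a b : a <> C0 -> b <> C0 -> Cmul a b <> C0.
Proof. intros Ha Hb H; destruct (Cmul_integral _ _ H); auto. Qed.

Lemma Cinv_nz a : a <> C0 -> Cinv a <> C0.
Proof.
  intros Ha H. assert (Cmul (Cinv a) a = C1) by (field; auto).
  rewrite H in H0. replace (Cmul C0 a) with C0 in H0 by ring.
  unfold C0, C1 in H0; injection H0; lra.
Qed.

Lemma Cinv_mul a b : Cinv (Cmul a b) = Cmul (Cinv a) (Cinv b).
Proof.
  destruct (CC_dec a C0) as [->|Ha].
  { replace (Cmul C0 b) with C0 by ring. rewrite Cinv_C0. ring. }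
  destruct (CC_dec b C0) as [->|Hb].
  { replace (Cmul a C0) with C0 by ring. rewrite Cinv_C0. ring. }
  field. split; auto.
Qed.

Lemma Cinv_inv a : Cinv (Cinv a) = a.
Proof.
  destruct (CC_dec a C0) as [->|Ha]. { rewrite Cinv_C0; apply Cinv_C0. }
  field. split; [exact Ha | exact C1_nz].
Qed.

Lemma Cinv_1 : Cinv C1 = C1.
Proof. field. unfold C0, C1; intro H; injection H; lra. Qed.


Lemma Cnorm_mod x : Cnorm x = Complex.Cmod x.
Proof. unfold Cnorm, Complex.Cmod. f_equal. simpl. ring. Qed.

Lemma Cnorm_triangle x y : Cnorm (Cadd x y) <= Cnorm x + Cnorm y.
Proof. rewrite !Cnorm_mod. apply Complex.Cmod_triangle. Qed.

Lemma Cnorm_mul x y : Cnorm (Cmul x y) = Cnorm x * Cnorm y.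
Proof. rewrite !Cnorm_mod. apply (Complex.Cmod_mult x y). Qed.

Lemma Cnorm_ge0 x : 0 <= Cnorm x.
Proof. unfold Cnorm; apply sqrt_pos. Qed.

Lemma Cnorm_C0 : Cnorm C0 = 0.
Proof. unfold Cnorm, C0; simpl. rewrite Rmult_0_l, Rplus_0_l. apply sqrt_0. Qed.

Lemma Cnorm_inv x : Cnorm (Cinv x) = / Cnorm x.
Proof.
  destruct (CC_dec x C0) as [->|Hx].
  { rewrite Cinv_C0, Cnorm_C0. rewrite Rinv_0. auto. }
  assert (H1 : Cmul (Cinv x) x = C1) by (field; auto).
  assert (Cnorm (Cinv x) * Cnorm x = 1).
  { rewrite <- Cnorm_mul, H1. unfold Cnorm, C1; cbn [fst snd]. replace (1*1+0*0) with 1 by ring. apply sqrt_1. }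
  assert (Cnorm x <> 0) by (intro E; rewrite E in H; lra).
  apply (Rmult_eq_reg_r (Cnorm x)); auto. rewrite H, Rinv_l; auto.
Qed.

Lemma Cnorm_opp_sub a b : Cnorm (Csub a b) = Cnorm (Csub b a).
Proof. unfold Cnorm, Csub, Cadd, Copp; simpl. f_equal; ring. Qed.


Lemma Cpow_add z a b : Cpow z (a + b) = Cmul (Cpow z a) (Cpow z b).
Proof. induction a; simpl. ring. rewrite IHa. ring. Qed.

Lemma Cpow_mul x y n : Cpow (Cmul x y) n = Cmul (Cpow x n) (Cpow y n).
Proof. induction n; simpl. ring. rewrite IHn. ring. Qed.

Lemma Cpow_mul_exp x a b : Cpow x (a * b) = Cpow (Cpow x a) b.
Proof.
  induction b; simpl. rewrite Nat.mul_0_r; auto.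
  rewrite Nat.mul_succ_r, Nat.add_comm, Cpow_add, IHb. ring.
Qed.

Lemma Cpow_inv x n : Cpow (Cinv x) n = Cinv (Cpow x n).
Proof. induction n; simpl. symmetry; apply Cinv_1. rewrite Cinv_mul, IHn; auto. Qed.

Lemma Cpow_nz x n : x <> C0 -> Cpow x n <> C0.
Proof. intro H; induction n; simpl. apply C1_nz. apply Cmul_nz; auto. Qed.

Lemma Cpow_C1 n : Cpow C1 n = C1.
Proof. induction n; simpl; auto. rewrite IHn; ring. Qed.

Lemma Cpowz_succ z k : z <> C0 -> Cpowz z (Z.succ k) = Cmul z (Cpowz z k).
Proof.
  intro Hz. destruct k as [|p|p]; simpl.
  - ring.
  - rewrite Pos2Nat.inj_add, Nat.add_comm. simpl. auto.
  - destruct (Pos.succ_pred_or p) as [->|Hp].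
    + simpl. field. auto.
    + rewrite <- Hp. rewrite Z.pos_sub_lt by lia.
      replace (Pos.succ (Pos.pred p) - 1)%positive with (Pos.pred p) by lia.
      simpl. rewrite Pos2Nat.inj_succ. simpl. field. auto.
Qed.

Lemma Cpowz_pred z k : z <> C0 -> Cpowz z (Z.pred k) = Cmul (Cinv z) (Cpowz z k).
Proof.
  intro Hz. rewrite <- (Z.succ_pred k) at 2. rewrite Cpowz_succ by auto. field. auto.
Qed.

Lemma Cpowz_add z a b : z <> C0 -> Cpowz z (a + b) = Cmul (Cpowz z a) (Cpowz z b).
Proof.
  intro Hz. induction b using Z.peano_ind.
  - rewrite Z.add_0_r. simpl. ring.
  - rewrite Z.add_succ_r, !Cpowz_succ, IHb by auto. ring.
  - rewrite Z.add_pred_r, !Cpowz_pred, IHb by auto. ring.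
Qed.

Lemma Cpowz_inv z k : Cpowz (Cinv z) k = Cpowz z (- k).
Proof. destruct k; simpl; auto. rewrite Cinv_inv. auto. Qed.

Lemma Cpowz_nz z k : z <> C0 -> Cpowz z k <> C0.
Proof.
  intro H; destruct k; simpl. apply C1_nz. apply Cpow_nz; auto.
  apply Cpow_nz, Cinv_nz; auto.
Qed.

Fixpoint zsub (ss ks : list Z) : list Z :=
  match ss, ks with
  | s :: ss', k :: ks' => (s - k)%Z :: zsub ss' ks'
  | _, _ => []
  end.

Lemma zsub_length ss ks : length ss = length ks -> length (zsub ss ks) = length ks.
Proof.
  revert ks; induction ss; destruct ks; simpl; intros; try lia. f_equal; apply IHss; lia.
Qed.

Lemma zsub_inv ss ks : length ss = length ks -> zsub ss (zsub ss ks) = ks.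
Proof.
  revert ks; induction ss; destruct ks; simpl; intros; try lia; auto.
  f_equal. lia. apply IHss; lia.
Qed.

Lemma monom_app l m x k : length l = length m ->
  monom (l ++ [x]) (m ++ [k]) = Cmul (monom l m) (Cpowz x k).
Proof.
  revert m; induction l; destruct m; simpl; intros; try lia.
  - ring.
  - rewrite IHl by lia. ring.
Qed.

Lemma monom_rev l m : length l = length m -> monom (rev l) (rev m) = monom l m.
Proof.
  revert m; induction l; destruct m; simpl; intros; try lia; auto.
  rewrite monom_app by (rewrite !length_rev; lia). rewrite IHl by lia. ring.
Qed.

Lemma monom_shift z ss ks :
  Forall (fun x => x <> C0) z -> length z = length ss -> length ss = length ks ->
  monom z ks = Cmul (monom z ss) (monom (map Cinv z) (zsub ss ks)).
Proof.
  revert ss ks; induction z as [|x z IHz]; intros [|s ss] [|k ks]; simpl; intros H H1 H2; try lia.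
  - ring.
  - inversion H; subst. rewrite (IHz ss ks) by (auto; lia).
    rewrite Cpowz_inv.
    replace k with (s + (- (s - k)))%Z at 1 by lia.
    rewrite Cpowz_add by auto. ring.
Qed.

Lemma monom_shift_rev z ss ks :
  Forall (fun x => x <> C0) z -> length z = length ss -> length ss = length ks ->
  monom z ks = Cmul (monom z ss) (monom (rev (map Cinv z)) (rev (zsub ss ks))).
Proof.
  intros. rewrite monom_rev. apply monom_shift; auto.
  rewrite length_map, zsub_length; lia.
Qed.

Lemma sumC_app l1 l2 : sumC (l1 ++ l2) = Cadd (sumC l1) (sumC l2).
Proof. induction l1; simpl. ring. rewrite IHl1. ring. Qed.

Lemma prodC_app l1 l2 : prodC (l1 ++ l2) = Cmul (prodC l1) (prodC l2).
Proof. induction l1; simpl. ring. rewrite IHl1. ring. Qed.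

Lemma sumC_mul c l : Cmul c (sumC l) = sumC (map (Cmul c) l).
Proof. induction l; simpl. ring. rewrite <- IHl. ring. Qed.

Lemma sumR_app l1 l2 : sumR (l1 ++ l2) = sumR l1 + sumR l2.
Proof. induction l1; simpl. ring. rewrite IHl1. ring. Qed.

Lemma prodC_nz l : Forall (fun x => x <> C0) l -> prodC l <> C0.
Proof. induction 1; simpl. apply C1_nz. apply Cmul_nz; auto. Qed.

Lemma prodC_pow l N : prodC (map (fun x => Cpow x N) l) = Cpow (prodC l) N.
Proof. induction l; simpl. rewrite Cpow_C1; auto. rewrite IHl, Cpow_mul; auto. Qed.

Lemma prodC_inv l : Cinv (prodC l) = prodC (map Cinv l).
Proof. induction l; simpl. apply Cinv_1. rewrite Cinv_mul, IHl; auto. Qed.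

Lemma prodC_mul {A} (f g : A -> CC) l :
  prodC (map (fun x => Cmul (f x) (g x)) l) = Cmul (prodC (map f l)) (prodC (map g l)).
Proof. induction l; simpl. ring. rewrite IHl; ring. Qed.

Lemma prodC_const {A} (c : CC) (l : list A) :
  prodC (map (fun _ => c) l) = Cpow c (length l).
Proof. induction l; simpl; auto. rewrite IHl; auto. Qed.


Section VSl.
Variable V : VS.

Lemma vadd_0r (x : V) : vadd x vzero = x.
Proof. rewrite vaddC. apply vadd0. Qed.

Lemma vadd_cancel (a x y : V) : vadd a x = vadd a y -> x = y.
Proof.
  intro H. rewrite <- (vadd0 V x), <- (vadd0 V y), <- (vaddN V a), <- !vaddA, H. auto.
Qed.

Lemma vzero_uniq (x : V) : vadd x x = x -> x = vzero.
Proof. intro H. apply (vadd_cancel x). rewrite H, vadd_0r. auto. Qed.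

Lemma vscal_0 c : vscal c (@vzero V) = vzero.
Proof. apply vzero_uniq. rewrite <- vscalDv, vadd0. auto. Qed.

Lemma vsum_app (l1 l2 : list V) : vsum (l1 ++ l2) = vadd (vsum l1) (vsum l2).
Proof. induction l1; simpl. rewrite vadd0; auto. rewrite IHl1, vaddA; auto. Qed.

Lemma vscal_sum c (l : list V) : vscal c (vsum l) = vsum (map (vscal c) l).
Proof. induction l; simpl. apply vscal_0. rewrite vscalDv, IHl; auto. Qed.
End VSl.

Lemma linear_0 {V W : VS} (f : V -> W) : linear f -> f vzero = vzero.
Proof.
  intros [Ha _]. apply vzero_uniq. rewrite <- Ha, vadd0. auto.
Qed.

Lemma linear_sum {V W : VS} (f : V -> W) l : linear f -> f (vsum l) = vsum (map f l).
Proof.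
  intro H. induction l; simpl. apply linear_0; auto. destruct H as [Ha _].
  rewrite Ha, IHl; auto.
Qed.

Lemma linearC_0 {V : VS} (f : V -> CC) : linearC f -> f vzero = C0.
Proof.
  intros [Ha _]. assert (E : f vzero = Cadd (f vzero) (f vzero)) by (rewrite <- Ha, vadd0; auto).
  transitivity (Csub (Cadd (f vzero) (f vzero)) (f vzero)); [ring|]. rewrite <- E. ring.
Qed.

Lemma linearC_sum {V : VS} (f : V -> CC) l : linearC f -> f (vsum l) = sumC (map f l).
Proof.
  intro H. induction l; simpl. apply linearC_0; auto. destruct H as [Ha _].
  rewrite Ha, IHl; auto.
Qed.

Lemma sumC_map_add {A} (a b : A -> CC) F :
  sumC (map (fun k => Cadd (a k) (b k)) F) = Cadd (sumC (map a F)) (sumC (map b F)).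
Proof. induction F; simpl. ring. rewrite IHF; ring. Qed.

Lemma sumC_map_mul {A} c (a : A -> CC) F :
  sumC (map (fun k => Cmul c (a k)) F) = Cmul c (sumC (map a F)).
Proof. induction F; simpl. ring. rewrite IHF; ring. Qed.

Lemma sumR_map_le {A} (a b : A -> R) F : (forall k, a k <= b k) ->
  sumR (map a F) <= sumR (map b F).
Proof. intro H; induction F; simpl. lra. specialize (H a0). lra. Qed.

Lemma sumR_map_add {A} (a b : A -> R) F :
  sumR (map (fun k => a k + b k) F) = sumR (map a F) + sumR (map b F).
Proof. induction F; simpl. ring. rewrite IHF; ring. Qed.

Lemma sumR_map_mul {A} c (a : A -> R) F :
  sumR (map (fun k => c * a k) F) = c * sumR (map a F).
Proof. induction F; simpl. ring. rewrite IHF; ring. Qed.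

Lemma abs_ext n a b S : abs_summable_to n a S ->
  (forall k, length k = n -> a k = b k) -> abs_summable_to n b S.
Proof.
  intros [[M HM] HE] Hab. assert (HF : forall F, idx_ok n F -> map b F = map a F).
  { intros F [_ HF]. apply map_ext_in. intros k Hk. symmetry; apply Hab.
    rewrite Forall_forall in HF; auto. }
  split.
  - exists M. intros F HF'. rewrite <- map_map with (f := b) (g := Cnorm).
    rewrite HF by auto. rewrite map_map. auto.
  - intros eps He. destruct (HE eps He) as [F0 [H0 H1]]. exists F0. split; auto.
    intros F HF' Hi. rewrite HF by auto. auto.
Qed.

Lemma abs_zero n : abs_summable_to n (fun _ => C0) C0.
Proof.
  split.
  - exists 0. intros F _. induction F; simpl. lra. rewrite Cnorm_C0 in *. lra.
  - intros eps He. exists []. split. split; constructor. intros F _ _.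
    assert (E : sumC (map (fun _ : list Z => C0) F) = C0).
    { induction F; simpl. auto. rewrite IHF. ring. }
    rewrite E. replace (Csub C0 C0) with C0 by ring. rewrite Cnorm_C0; auto.
Qed.

Lemma idx_ok_nodup n F : Forall (fun k => length k = n) F ->
  idx_ok n (nodup (list_eq_dec Z.eq_dec) F).
Proof.
  intro H. split. apply NoDup_nodup. rewrite Forall_forall in *. intros x Hx.
  apply H. apply nodup_In in Hx; auto.
Qed.

Lemma abs_add n a b S T : abs_summable_to n a S -> abs_summable_to n b T ->
  abs_summable_to n (fun k => Cadd (a k) (b k)) (Cadd S T).
Proof.
  intros [[M1 HM1] HE1] [[M2 HM2] HE2]. split.
  - exists (M1 + M2). intros F HF.
    apply Rle_trans with (sumR (map (fun k => Cnorm (a k) + Cnorm (b k)) F)).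
    + apply sumR_map_le. intro; apply Cnorm_triangle.
    + rewrite sumR_map_add. specialize (HM1 F HF); specialize (HM2 F HF). lra.
  - intros eps He.
    destruct (HE1 (eps/2)) as [F1 [Hok1 H1]]. lra.
    destruct (HE2 (eps/2)) as [F2 [Hok2 H2]]. lra.
    exists (nodup (list_eq_dec Z.eq_dec) (F1 ++ F2)). split.
    + apply idx_ok_nodup. apply Forall_app. split; [apply Hok1|apply Hok2].
    + intros F HF Hi.
      assert (incl F1 F). { intros x Hx; apply Hi, nodup_In, in_or_app; auto. }
      assert (incl F2 F). { intros x Hx; apply Hi, nodup_In, in_or_app; auto. }
      specialize (H1 F HF H). specialize (H2 F HF H0).
      rewrite sumC_map_add.
      replace (Csub (Cadd (sumC (map a F)) (sumC (map b F))) (Cadd S T))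
        with (Cadd (Csub (sumC (map a F)) S) (Csub (sumC (map b F)) T)) by ring.
      eapply Rle_lt_trans. apply Cnorm_triangle. lra.
Qed.

Lemma abs_scale n c a S : abs_summable_to n a S ->
  abs_summable_to n (fun k => Cmul c (a k)) (Cmul c S).
Proof.
  intros [[M HM] HE]. pose proof (Cnorm_ge0 c) as Hc. split.
  - exists (Cnorm c * M). intros F HF.
    replace (map (fun k => Cnorm (Cmul c (a k))) F) with (map (fun k => Cnorm c * Cnorm (a k)) F).
    rewrite sumR_map_mul. apply Rmult_le_compat_l; auto.
    apply map_ext. intro; rewrite Cnorm_mul; auto.
  - intros eps He. destruct (HE (eps / (Cnorm c + 1))) as [F0 [Hok H1]].
    apply Rdiv_lt_0_compat; lra.
    exists F0. split; auto. intros F HF Hi. specialize (H1 F HF Hi).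
    rewrite sumC_map_mul.
    replace (Csub (Cmul c (sumC (map a F))) (Cmul c S)) with (Cmul c (Csub (sumC (map a F)) S)) by ring.
    rewrite Cnorm_mul.
    apply Rle_lt_trans with ((Cnorm c + 1) * Cnorm (Csub (sumC (map a F)) S)).
    + pose proof (Cnorm_ge0 (Csub (sumC (map a F)) S)). nra.
    + apply Rmult_lt_compat_l with (r := Cnorm c + 1) in H1; [|lra].
      replace ((Cnorm c + 1) * (eps / (Cnorm c + 1))) with eps in H1 by (field; lra). lra.
Qed.

Lemma nodup_left_inv (f g : list Z -> list Z) F :
  NoDup F -> (forall k, In k F -> g (f k) = k) -> NoDup (map f F).
Proof.
  intros H Hg. apply NoDup_map_inv with (f := g). rewrite map_map.
  rewrite map_ext_in with (g := fun x => x). rewrite map_id; auto. auto.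
Qed.

Lemma abs_reindex n a S (phi psi : list Z -> list Z) :
  (forall k, length k = n -> length (phi k) = n /\ psi (phi k) = k) ->
  (forall k, length k = n -> length (psi k) = n /\ phi (psi k) = k) ->
  abs_summable_to n a S -> abs_summable_to n (fun k => a (phi k)) S.
Proof.
  intros Hp Hq [[M HM] HE].
  assert (Hok : forall F, idx_ok n F -> idx_ok n (map phi F)).
  { intros F [Hn Hl]. rewrite Forall_forall in Hl. split.
    - apply nodup_left_inv with psi; auto. intros; apply Hp; auto.
    - rewrite Forall_forall. intros x Hx. apply in_map_iff in Hx as [y [<- Hy]]. apply Hp; auto. }
  assert (Hok' : forall F, idx_ok n F -> idx_ok n (map psi F)).
  { intros F [Hn Hl]. rewrite Forall_forall in Hl. split.
    - apply nodup_left_inv with phi; auto. intros; apply Hq; auto.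
    - rewrite Forall_forall. intros x Hx. apply in_map_iff in Hx as [y [<- Hy]]. apply Hq; auto. }
  split.
  - exists M. intros F HF. specialize (HM _ (Hok F HF)). rewrite map_map in HM. auto.
  - intros eps He. destruct (HE eps He) as [F0 [H0 H1]]. exists (map psi F0). split; auto.
    intros F HF Hi. specialize (H1 (map phi F) (Hok F HF)). rewrite map_map in H1. apply H1.
    intros x Hx. destruct H0 as [_ H0]. rewrite Forall_forall in H0.
    destruct (Hq x (H0 x Hx)) as [_ E]. rewrite <- E. apply in_map. apply Hi. apply in_map; auto.
Qed.


Lemma vsum_flat_map {V : VS} {A B} (F : B -> V) (G : A -> list B) l :
  vsum (map F (flat_map G l)) = vsum (map (fun t => vsum (map F (G t))) l).
Proof. induction l; simpl; auto. rewrite map_app, vsum_app, IHl; auto. Qed.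

Lemma linear_id {V : VS} : linear (fun x : V => x).
Proof. split; auto. Qed.

Lemma linear_comp {U V W : VS} (f : V -> W) (g : U -> V) :
  linear f -> linear g -> linear (fun x => f (g x)).
Proof. intros [Fa Fs] [Ga Gs]. split; intros. rewrite Ga, Fa; auto. rewrite Gs, Fs; auto. Qed.

Lemma prodY_linear {V A : VS} (Y : A -> V -> Z -> V) :
  (forall u k, linear (fun w => Y u w k)) -> forall as_ js, linear (prodY Y as_ js).
Proof.
  intros H; induction as_; destruct js; simpl; try apply linear_id.
  apply (linear_comp (fun w => Y a w z) (prodY Y as_ js)); auto.
Qed.

Lemma prodY_app {V A : VS} (Y : A -> V -> Z -> V) as_ js a j w :
  length as_ = length js ->
  prodY Y (as_ ++ [a]) (js ++ [j]) w = prodY Y as_ js (Y a w j).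
Proof.
  revert js; induction as_; destruct js; simpl; intros; try lia; auto.
  rewrite IHas_ by lia; auto.
Qed.

Definition Tl (V : mosva_data) (u : mV V) : list (Z * nat) :=
  flat_map (fun p => map (fun m => (p, m)) (seq 0 (S (Z.to_nat (p - mlow V))))) (supp (mgr V) u).
Definition cf (t : Z * nat) : CC := Cmul (signZ (fst t)) (RtoC (/ INR (fact (snd t)))).
Definition Aop (V : mosva_data) (u : mV V) (t : Z * nat) : mV V :=
  Nat.iter (snd t) (mL_1 V) (proj (mgr V) (fst t) u).
Definition sh (t : Z * nat) : Z := (Z.of_nat (snd t) - 2 * fst t)%Z.

Lemma Yo_expand V W u w k :
  Yo V W u w k = vsum (map (fun t => vscal (cf t) (wY W (Aop V u t) w (sh t - k)%Z)) (Tl V u)).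
Proof.
  unfold Yo, Tl. induction (supp (mgr V) u); [reflexivity|]. cbn [flat_map].
  rewrite map_app, vsum_app, vsum_app, IHl. f_equal. f_equal.
  rewrite map_map. apply map_ext. intro m. unfold cf, Aop, sh; simpl. f_equal. f_equal. lia.
Qed.

Section Exp.
Variable V : mosva_data.
Variable W : lmod_data V.
Hypothesis HlinW : forall u k, linear (fun w => wY W u w k).

Lemma prodYo_expand (us : list (mV V)) : exists L : list (CC * list (mV V) * list Z),
  Forall (fun t => length (snd (fst t)) = length us /\ length (snd t) = length us) L /\
  forall w ks, length ks = length us ->
   prodYo_rev V W us ks w =
   vsum (map (fun t => vscal (fst (fst t)) (prodY (wY W) (snd (fst t)) (rev (zsub (snd t) ks)) w)) L).
Proof.
  induction us as [|u us IH].
  - exists [(C1, [], [])]. split. repeat constructor.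
    intros w [|] H; simpl in *; try lia. rewrite vscal1, vadd_0r; auto.
  - destruct IH as [L' [HL' HE]].
    exists (flat_map (fun t => map (fun q => (Cmul (fst (fst t)) (cf q), snd (fst t) ++ [Aop V u q], sh q :: snd t)) (Tl V u)) L').
    split.
    + rewrite Forall_forall in *. intros x Hx. apply in_flat_map in Hx as [t [Ht Hx]].
      apply in_map_iff in Hx as [q [<- Hq]]. simpl. rewrite length_app. simpl.
      destruct (HL' t Ht). lia.
    + intros w [|k ks] Hl; simpl in Hl; try lia. simpl prodYo_rev.
      rewrite HE by lia. rewrite vsum_flat_map. f_equal. apply map_ext_in.
      intros t Ht. rewrite Forall_forall in HL'. destruct (HL' t Ht) as [H1 H2].
      rewrite Yo_expand. rewrite linear_sum by (apply prodY_linear; auto).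
      rewrite vscal_sum. rewrite !map_map. f_equal. apply map_ext. intro q. simpl.
      rewrite (proj2 (prodY_linear _ HlinW _ _)). rewrite vscalA.
      rewrite prodY_app. auto. rewrite length_rev, zsub_length; lia.
Qed.
End Exp.


Inductive lexpr := LC (c : CC) | LV (i : nat) | LI (i : nat) | LA (a b : lexpr) | LM (a b : lexpr).
Fixpoint leval (e : lexpr) (z : list CC) : CC :=
  match e with
  | LC c => c | LV i => zz z i | LI i => Cinv (zz z i)
  | LA a b => Cadd (leval a z) (leval b z) | LM a b => Cmul (leval a z) (leval b z)
  end.
Fixpoint noinv (e : lexpr) : Prop :=
  match e with LI _ => False | LA a b | LM a b => noinv a /\ noinv b | _ => True end.

Definition Lau n (g : list CC -> CC) := exists e, forall z, off_poles n z -> g z = leval e z.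
Definition Pol n (g : list CC -> CC) := exists e, noinv e /\ forall z, off_poles n z -> g z = leval e z.

Section Cl.
Variable n : nat.
Lemma Lau_ext f g : Lau n f -> (forall z, off_poles n z -> f z = g z) -> Lau n g.
Proof. intros [e He] H. exists e. intros z Hz. rewrite <- H; auto. Qed.
Lemma Pol_ext f g : Pol n f -> (forall z, off_poles n z -> f z = g z) -> Pol n g.
Proof. intros [e [Hn He]] H. exists e. split; auto. intros z Hz. rewrite <- H; auto. Qed.
Lemma Lau_c c : Lau n (fun _ => c). Proof. exists (LC c); auto. Qed.
Lemma Pol_c c : Pol n (fun _ => c). Proof. exists (LC c); simpl; auto. Qed.
Lemma Lau_v i : Lau n (fun z => zz z i). Proof. exists (LV i); auto. Qed.
Lemma Pol_v i : Pol n (fun z => zz z i). Proof. exists (LV i); simpl; auto. Qed.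
Lemma Lau_i i : Lau n (fun z => Cinv (zz z i)). Proof. exists (LI i); auto. Qed.
Lemma Lau_add f g : Lau n f -> Lau n g -> Lau n (fun z => Cadd (f z) (g z)).
Proof. intros [a Ha] [b Hb]. exists (LA a b). intros; simpl; rewrite Ha, Hb; auto. Qed.
Lemma Lau_mul f g : Lau n f -> Lau n g -> Lau n (fun z => Cmul (f z) (g z)).
Proof. intros [a Ha] [b Hb]. exists (LM a b). intros; simpl; rewrite Ha, Hb; auto. Qed.
Lemma Pol_add f g : Pol n f -> Pol n g -> Pol n (fun z => Cadd (f z) (g z)).
Proof. intros [a [? Ha]] [b [? Hb]]. exists (LA a b). split. simpl; auto. intros; simpl; rewrite Ha, Hb; auto. Qed.
Lemma Pol_mul f g : Pol n f -> Pol n g -> Pol n (fun z => Cmul (f z) (g z)).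
Proof. intros [a [? Ha]] [b [? Hb]]. exists (LM a b). split. simpl; auto. intros; simpl; rewrite Ha, Hb; auto. Qed.
Lemma Pol_Lau f : Pol n f -> Lau n f.
Proof. intros [a [_ Ha]]. exists a; auto. Qed.
Lemma Lau_sub f g : Lau n f -> Lau n g -> Lau n (fun z => Csub (f z) (g z)).
Proof.
  intros Hf Hg. eapply Lau_ext. apply Lau_add. apply Hf. apply Lau_mul. apply (Lau_c (Copp C1)). apply Hg.
  intros; simpl. unfold Csub. f_equal. ring.
Qed.
Lemma Pol_sub f g : Pol n f -> Pol n g -> Pol n (fun z => Csub (f z) (g z)).
Proof.
  intros Hf Hg. eapply Pol_ext. apply Pol_add. apply Hf. apply Pol_mul. apply (Pol_c (Copp C1)). apply Hg.
  intros; simpl. unfold Csub. f_equal. ring.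
Qed.
Lemma Lau_pow f N : Lau n f -> Lau n (fun z => Cpow (f z) N).
Proof. intro H. induction N; simpl. apply Lau_c. apply Lau_mul; auto. Qed.
Lemma Pol_pow f N : Pol n f -> Pol n (fun z => Cpow (f z) N).
Proof. intro H. induction N; simpl. apply Pol_c. apply Pol_mul; auto. Qed.
Lemma Lau_prod {A} (F : A -> list CC -> CC) l : (forall x, In x l -> Lau n (F x)) ->
  Lau n (fun z => prodC (map (fun x => F x z) l)).
Proof. induction l; simpl; intros. apply Lau_c. apply Lau_mul; auto. Qed.
Lemma Pol_prod {A} (F : A -> list CC -> CC) l : (forall x, In x l -> Pol n (F x)) ->
  Pol n (fun z => prodC (map (fun x => F x z) l)).
Proof. induction l; simpl; intros. apply Pol_c. apply Pol_mul; auto. Qed.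
Lemma Lau_sum {A} (F : A -> list CC -> CC) l : (forall x, In x l -> Lau n (F x)) ->
  Lau n (fun z => sumC (map (fun x => F x z) l)).
Proof. induction l; simpl; intros. apply Lau_c. apply Lau_add; auto. Qed.
End Cl.

Definition prodz n z := prodC (map (zz z) (seq 0 n)).
Definition Pall n z := prodC (map (fun ij => Csub (zz z (fst ij)) (zz z (snd ij))) (pairs_lt n)).

Lemma pairs_lt_In n i j : In (i, j) (pairs_lt n) <-> (i < j < n)%nat.
Proof.
  unfold pairs_lt. rewrite in_flat_map. split.
  - intros [x [Hx Hy]]. apply in_map_iff in Hy as [y [E Hy]]. injection E; intros; subst.
    apply in_seq in Hx; apply in_seq in Hy. lia.
  - intros H. exists i. split. apply in_seq; lia. apply in_map_iff. exists j. split; auto.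
    apply in_seq; lia.
Qed.

Lemma pole_den_eq n N z : pole_den n N z = Cmul (Cpow (prodz n z) N) (Cpow (Pall n z) N).
Proof.
  unfold pole_den, prodz, Pall. rewrite <- !prodC_pow, !map_map. auto.
Qed.

Lemma prodz_nz n z : off_poles n z -> prodz n z <> C0.
Proof.
  intros [_ [H _]]. apply prodC_nz. rewrite Forall_forall. intros x Hx.
  apply in_map_iff in Hx as [i [<- Hi]]. apply in_seq in Hi. apply H; lia.
Qed.

Lemma Csub_eq0 a b : Csub a b = C0 -> a = b.
Proof. intro H. transitivity (Cadd (Csub a b) b). ring. rewrite H. ring. Qed.

Lemma Pall_nz n z : off_poles n z -> Pall n z <> C0.
Proof.
  intros [_ [_ H]]. apply prodC_nz. rewrite Forall_forall. intros x Hx.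
  apply in_map_iff in Hx as [[i j] [<- Hi]]. apply pairs_lt_In in Hi. simpl.
  intro E. apply (H i j); try lia. apply Csub_eq0; auto.
Qed.

Lemma pole_den_nz n N z : off_poles n z -> pole_den n N z <> C0.
Proof.
  intro H. rewrite pole_den_eq. apply Cmul_nz; apply Cpow_nz.
  apply prodz_nz; auto. apply Pall_nz; auto.
Qed.

Lemma prodC_cons a l : prodC (a :: l) = Cmul a (prodC l).
Proof. reflexivity. Qed.

Lemma Pol_prodz n : Pol n (prodz n).
Proof. unfold prodz. apply (Pol_prod n (fun i z => zz z i)). intros; apply Pol_v. Qed.

Lemma Pol_Pall n : Pol n (Pall n).
Proof.
  unfold Pall. apply (Pol_prod n (fun ij z => Csub (zz z (fst ij)) (zz z (snd ij)))).
  intros; apply Pol_sub; apply Pol_v.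
Qed.

Lemma Pol_pd n N : Pol n (fun z => pole_den n N z).
Proof.
  eapply Pol_ext. apply Pol_mul; apply Pol_pow; [apply Pol_prodz | apply Pol_Pall].
  intros; rewrite pole_den_eq; auto.
Qed.

Lemma zz_overflow z i : (length z <= i)%nat -> zz z i = C0.
Proof. intro; unfold zz; apply nth_overflow; auto. Qed.

Lemma Lau_Pol n e : exists M, Pol n (fun z => Cmul (leval e z) (Cpow (prodz n z) M)).
Proof.
  assert (PP : forall M, Pol n (fun z => Cpow (prodz n z) M)).
  { intro; apply Pol_pow, Pol_prodz. }
  induction e as [c|i|i|a [Ma Ha] b [Mb Hb]|a [Ma Ha] b [Mb Hb]]; simpl.
  - exists 0%nat. eapply Pol_ext. apply (Pol_c n c). intros; simpl; ring.
  - exists 0%nat. eapply Pol_ext. apply (Pol_v n i). intros; simpl; ring.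
  - destruct (Nat.lt_ge_cases i n) as [Hi|Hi].
    + exists 1%nat. assert (Hin : In i (seq 0 n)) by (apply in_seq; lia).
      destruct (in_split _ _ Hin) as [l1 [l2 E]].
      eapply Pol_ext. apply (Pol_prod n (fun j z => zz z j) (l1 ++ l2)). intros; apply Pol_v.
      intros z Hz. unfold prodz. rewrite E, !map_app, !prodC_app. cbn [map prodC Cpow].
      change (fun x => zz z x) with (zz z).
      rewrite prodC_cons.
      assert (zz z i <> C0) by (apply Hz; auto). field. auto.
    + exists 0%nat. eapply Pol_ext. apply (Pol_c n C0). intros z [Hl _].
      rewrite zz_overflow by lia. rewrite Cinv_C0. simpl. ring.
  - exists (Ma + Mb)%nat. eapply Pol_ext.
    apply Pol_add; apply Pol_mul; [apply Ha| apply (PP Mb) | apply Hb | apply (PP Ma)].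
    intros; rewrite Cpow_add; ring.
  - exists (Ma + Mb)%nat. eapply Pol_ext.
    apply Pol_mul; [apply Ha| apply Hb].
    intros; rewrite Cpow_add; ring.
Qed.

Fixpoint addexp (e1 e2 : list nat) : list nat :=
  match e1 with
  | [] => e2
  | a :: e => match e2 with [] => e1 | b :: f => (a + b)%nat :: addexp e f end
  end.

Lemma monom_nat_nil z : monom_nat z [] = C1.
Proof. destruct z; auto. Qed.

Lemma monom_nat_add z e1 e2 : monom_nat z (addexp e1 e2) = Cmul (monom_nat z e1) (monom_nat z e2).
Proof.
  revert e1 e2; induction z as [|x z IHz]; intros [|a e] [|b f]; simpl; try ring.
  rewrite IHz, Cpow_add. ring.
Qed.

Definition pmul (P Q : mpoly) : mpoly :=
  flat_map (fun t => map (fun s => (Cmul (fst t) (fst s), addexp (snd t) (snd s))) Q) P.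

Lemma peval_app P Q z : peval (P ++ Q) z = Cadd (peval P z) (peval Q z).
Proof. unfold peval. rewrite map_app, sumC_app. auto. Qed.

Lemma peval_mul P Q z : peval (pmul P Q) z = Cmul (peval P z) (peval Q z).
Proof.
  unfold pmul. induction P as [|t P IH]. unfold peval; simpl; ring.
  cbn [flat_map]. rewrite peval_app, IH.
  assert (E: peval (map (fun s => (Cmul (fst t) (fst s), addexp (snd t) (snd s))) Q) z
             = Cmul (Cmul (fst t) (monom_nat z (snd t))) (peval Q z)).
  { unfold peval. rewrite map_map, sumC_mul, map_map. f_equal. apply map_ext. intro s.
    simpl. rewrite monom_nat_add. ring. }
  rewrite E. change (peval (t :: P) z) with (Cadd (Cmul (fst t) (monom_nat z (snd t))) (peval P z)).
  ring.
Qed.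

Lemma monom_nat_var z i : (i < length z)%nat -> monom_nat z (repeat 0%nat i ++ [1%nat]) = zz z i.
Proof.
  revert z; induction i; intros [|x z] H; simpl in *; try lia.
  - rewrite monom_nat_nil. unfold zz; simpl. ring.
  - rewrite IHi by lia. unfold zz; simpl. ring.
Qed.

Lemma Pol_mpoly n e : noinv e -> exists P, forall z, length z = n -> leval e z = peval P z.
Proof.
  induction e; simpl; intros H.
  - exists [(c, [])]. intros; unfold peval; simpl. rewrite monom_nat_nil. ring.
  - destruct (Nat.lt_ge_cases i n).
    + exists [(C1, repeat 0%nat i ++ [1%nat])]. intros; unfold peval; simpl.
      rewrite monom_nat_var by lia. ring.
    + exists [(C0, [])]. intros. unfold peval; simpl. rewrite zz_overflow by lia. ring.
  - contradiction.
  - destruct H as [H1 H2]. destruct (IHe1 H1) as [P HP]; destruct (IHe2 H2) as [Q HQ].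
    exists (P ++ Q). intros. rewrite peval_app, HP, HQ; auto.
  - destruct H as [H1 H2]. destruct (IHe1 H1) as [P HP]; destruct (IHe2 H2) as [Q HQ].
    exists (pmul P Q). intros. rewrite peval_mul, HP, HQ; auto.
Qed.

Definition RL n (f : list CC -> CC) := exists T, Lau n (fun z => Cmul (f z) (pole_den n T z)).

Lemma RL_rational n f : RL n f -> rational_poles n f.
Proof.
  intros [T [e He]]. destruct (Lau_Pol n e) as [M HM].
  assert (HP : Pol n (fun z => Cmul (f z) (pole_den n (T + M) z))).
  { eapply Pol_ext. apply Pol_mul. apply HM. apply (Pol_pow n (Pall n) M), Pol_Pall.
    intros z Hz. cbv beta. rewrite <- He by auto. rewrite !pole_den_eq, !Cpow_add. ring. }
  destruct HP as [e' [Hn He']]. destruct (Pol_mpoly n e' Hn) as [P HPe].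
  exists P, (T + M)%nat. intros z Hz. rewrite <- HPe by apply Hz. rewrite <- He' by auto.
  unfold Cdiv. field. apply pole_den_nz; auto.
Qed.

Lemma RL_add n f g : RL n f -> RL n g -> RL n (fun z => Cadd (f z) (g z)).
Proof.
  intros [T1 H1] [T2 H2]. exists (T1 + T2)%nat. eapply Lau_ext.
  apply Lau_add; apply Lau_mul; [apply H1 | apply Pol_Lau, (Pol_pd n T2) | apply H2 | apply Pol_Lau, (Pol_pd n T1)].
  intros z Hz. rewrite !pole_den_eq, !Cpow_add. ring.
Qed.

Lemma RL_mul n f h : RL n f -> Lau n h -> RL n (fun z => Cmul (h z) (f z)).
Proof.
  intros [T H1] H2. exists T. eapply Lau_ext. apply Lau_mul. apply H2. apply H1.
  intros; simpl; ring.
Qed.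

Lemma RL_zero n : RL n (fun _ => C0).
Proof. exists 0%nat. eapply Lau_ext. apply (Lau_c n C0). intros; cbv beta; ring. Qed.


Definition yz (z : list CC) := rev (map Cinv z).

Lemma zz_yz n z i : length z = n -> (i < n)%nat -> zz (yz z) i = Cinv (zz z (n - 1 - i)).
Proof.
  intros Hl Hi. unfold zz, yz. rewrite rev_nth by (rewrite length_map; lia).
  rewrite length_map. rewrite nth_indep with (d' := Cinv C0) by (rewrite length_map; lia).
  rewrite map_nth. f_equal. f_equal. lia.
Qed.

Lemma Cinv_inj a b : Cinv a = Cinv b -> a = b.
Proof. intro H. rewrite <- (Cinv_inv a), <- (Cinv_inv b), H. auto. Qed.

Lemma off_poles_yz n z : off_poles n z -> off_poles n (yz z).
Proof.
  intros [Hl [H1 H2]]. split; [|split].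
  - unfold yz. rewrite length_rev, length_map; auto.
  - intros i Hi. rewrite (zz_yz n) by auto. apply Cinv_nz, H1. lia.
  - intros i j Hij Hj. rewrite !(zz_yz n) by (auto; lia). intro E. apply Cinv_inj in E.
    apply (H2 (n - 1 - j)%nat (n - 1 - i)%nat); try lia. auto.
Qed.

Lemma prodC_ones {A} (f : A -> CC) l : (forall x, In x l -> f x = C1) -> prodC (map f l) = C1.
Proof. induction l; simpl; intros; auto. rewrite H, IHl by auto. ring. Qed.

Lemma monom_nat_prod z e :
  monom_nat z e = prodC (map (fun i => Cpow (zz z i) (nth i e 0%nat)) (seq 0 (length z))).
Proof.
  revert e; induction z as [|x z IH]; intros [|a e]; simpl; auto.
  - rewrite prodC_ones. ring. intros i _. destruct i; simpl; auto.
  - rewrite IH. rewrite <- seq_shift, map_map. auto.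
Qed.

Lemma Lau_peval_yz n P : Lau n (fun z => peval P (yz z)).
Proof.
  eapply Lau_ext.
  apply (Lau_sum n (fun t z => Cmul (fst t) (prodC (map (fun i => Cpow (Cinv (zz z (n - 1 - i))) (nth i (snd t) 0%nat)) (seq 0 n)))) P).
  - intros t _. apply Lau_mul. apply Lau_c.
    apply (Lau_prod n (fun i z => Cpow (Cinv (zz z (n - 1 - i))) (nth i (snd t) 0%nat))).
    intros; apply Lau_pow, Lau_i.
  - intros z Hz. unfold peval. apply f_equal. apply map_ext. intro t. f_equal.
    rewrite monom_nat_prod. unfold yz at 2. rewrite length_rev, length_map, (proj1 Hz).
    apply f_equal. apply map_ext_in. intros i Hi. apply in_seq in Hi.
    rewrite (zz_yz n) by (apply Hz || lia). auto.
Qed.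

Lemma Lau_pair n i j : In (i, j) (pairs_lt n) ->
  Lau n (fun z => Cmul (Cinv (Csub (zz (yz z) i) (zz (yz z) j))) (Pall n z)).
Proof.
  intro Hij. apply pairs_lt_In in Hij.
  assert (Hab : In (n - 1 - j, n - 1 - i)%nat (pairs_lt n)) by (apply pairs_lt_In; lia).
  destruct (in_split _ _ Hab) as [l1 [l2 E]].
  set (a := (n - 1 - j)%nat) in *. set (b := (n - 1 - i)%nat) in *.
  eapply Lau_ext.
  apply Lau_mul. apply Lau_mul. apply (Lau_v n a). apply (Lau_v n b).
  apply (Lau_prod n (fun ij z => Csub (zz z (fst ij)) (zz z (snd ij))) (l1 ++ l2)).
  intros; apply Lau_sub; apply Lau_v.
  intros z Hz. cbv beta. unfold Pall. rewrite E. rewrite !map_app, !prodC_app. cbn [map]. rewrite prodC_cons.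
  rewrite !(zz_yz n) by (apply Hz || lia). fold a b. simpl fst; simpl snd.
  destruct Hz as [Hl [H1 H2]].
  assert (Ha : zz z a <> C0) by (apply H1; lia).
  assert (Hb : zz z b <> C0) by (apply H1; lia).
  assert (Hd : Csub (zz z a) (zz z b) <> C0).
  { intro Q. apply (H2 a b); try lia. apply Csub_eq0; auto. }
  assert (Q : Csub (Cinv (zz z b)) (Cinv (zz z a)) = Cmul (Csub (zz z a) (zz z b)) (Cinv (Cmul (zz z a) (zz z b)))).
  { field. auto. }
  rewrite Q, Cinv_mul, Cinv_inv. field. auto.
Qed.

Lemma RL_yz n g : rational_poles n g -> RL n (fun z => g (yz z)).
Proof.
  intros [P [N HP]]. set (K := length (pairs_lt n)). exists (K * N)%nat.
  eapply Lau_ext.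
  - apply Lau_mul. apply Lau_mul. apply Lau_mul.
    + apply (Lau_peval_yz n P).
    + apply Lau_pow with (N := N). apply (Lau_prod n (fun i z => zz z (n - 1 - i)) (seq 0 n)). intros; apply Lau_v.
    + apply Lau_pow with (N := N).
      apply (Lau_prod n (fun ij z => Cmul (Cinv (Csub (zz (yz z) (fst ij)) (zz (yz z) (snd ij)))) (Pall n z)) (pairs_lt n)).
      intros [i j] H. apply Lau_pair; auto.
    + apply Pol_Lau, (Pol_pow n (prodz n) (K * N)), Pol_prodz.
  - intros z Hz. cbv beta. rewrite HP by (apply off_poles_yz; auto).
    rewrite prodC_mul, prodC_const. fold K.
    assert (Eprod : prodC (map (fun i => zz z (n - 1 - i)) (seq 0 n)) = Cinv (prodz n (yz z))).
    { unfold prodz. rewrite prodC_inv, map_map. apply f_equal. apply map_ext_in.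
      intros i Hi. apply in_seq in Hi. rewrite (zz_yz n) by (apply Hz || lia). rewrite Cinv_inv. auto. }
    assert (Ec : prodC (map (fun x => Cinv (Csub (zz (yz z) (fst x)) (zz (yz z) (snd x)))) (pairs_lt n))
                 = Cinv (Pall n (yz z))).
    { unfold Pall. rewrite prodC_inv, map_map. auto. }
    rewrite Eprod, Ec.
    rewrite (pole_den_eq n (K * N)), (pole_den_eq n N). rewrite Cpow_mul_exp with (x := Pall n z).
    unfold Cdiv. rewrite Cinv_mul, <- !Cpow_inv, Cpow_mul. ring.
Qed.


Lemma monom_prod z ks :
  monom z ks = prodC (map (fun i => Cpowz (zz z i) (nth i ks 0%Z)) (seq 0 (length z))).
Proof.
  revert ks; induction z as [|x z IH]; intros [|a ks]; simpl; auto.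
  - rewrite prodC_ones. ring. intros i _. destruct i; simpl; auto.
  - rewrite IH. rewrite <- seq_shift, map_map. auto.
Qed.

Lemma Lau_monom n ss : Lau n (fun z => monom z ss).
Proof.
  eapply Lau_ext. apply (Lau_prod n (fun i z => Cpowz (zz z i) (nth i ss 0%Z)) (seq 0 n)).
  - intros i _. destruct (nth i ss 0%Z); simpl.
    + apply Lau_c.
    + apply Lau_pow, Lau_v.
    + apply Lau_pow, Lau_i.
  - intros z Hz. rewrite monom_prod, (proj1 Hz). auto.
Qed.

Lemma Cnorm_pos_nz x : 0 < Cnorm x -> x <> C0.
Proof. intros H E. rewrite E, Cnorm_C0 in H. lra. Qed.

Lemma dec_region_nz n z : dec_region n z -> Forall (fun x => x <> C0) z.
Proof.
  intros [Hl [H1 _]]. apply Forall_nth. intros i d Hi.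
  rewrite nth_indep with (d' := C0) by auto. apply Cnorm_pos_nz, H1. lia.
Qed.

Lemma dec_region_yz n z : dec_region n z -> dec_region n (yz z).
Proof.
  intros [Hl [H1 H2]]. split; [|split].
  - unfold yz. rewrite length_rev, length_map; auto.
  - intros i Hi. rewrite (zz_yz n) by auto. rewrite Cnorm_inv. apply Rinv_0_lt_compat, H1. lia.
  - intros i Hi. rewrite !(zz_yz n) by (auto; lia). rewrite !Cnorm_inv.
    apply Rinv_lt_contravar.
    + apply Rmult_lt_0_compat; apply H1; lia.
    + replace (n - 1 - i)%nat with (S (n - 1 - S i))%nat by lia. apply H2. lia.
Qed.

Section Main.
Variable V : mosva_data.
Variable W : lmod_data V.
Hypothesis Hrat : forall (us : list (mV V)) (w : wW W) (w' : wW W -> CC), (1 <= length us)%nat -> gdual (wgr W) w' ->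
     exists f, rational_poles (length us) f /\
       forall z, dec_region (length us) z ->
         mseries_conv (length us) (fun ks => w' (prodY (wY W) us ks w)) z (f z).
Variable w : wW W.
Variable w' : wW W -> CC.
Hypothesis Hw' : gdual (wgr W) w'.
Variable n : nat.
Hypothesis Hn : (1 <= n)%nat.

Lemma combine (L0 : list (CC * list (mV V) * list Z)) :
  Forall (fun t => length (snd (fst t)) = n /\ length (snd t) = n) L0 ->
  exists F, RL n F /\ forall z, dec_region n z ->
   abs_summable_to n (fun ks => Cmul (sumC (map (fun t => Cmul (fst (fst t))
        (w' (prodY (wY W) (snd (fst t)) (rev (zsub (snd t) ks)) w))) L0)) (monom z ks)) (F z).
Proof.
  induction L0 as [|[[c as_] ss] L0 IH]; intros HL.
  - exists (fun _ => C0). split. apply RL_zero. intros z Hz.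
    eapply abs_ext. apply abs_zero. intros; simpl; ring.
  - apply Forall_cons_iff in HL as [[Ha Hs] HL']. simpl in Ha, Hs.
    destruct (IH HL') as [F [HF HFs]].
    destruct (Hrat as_ w w') as [g [Hg Hgs]]; auto. lia.
    rewrite Ha in Hg, Hgs.
    exists (fun z => Cadd (Cmul (Cmul c (monom z ss)) (g (yz z))) (F z)). split.
    + apply (RL_add n (fun z => Cmul (Cmul c (monom z ss)) (g (yz z))) F); auto.
      apply (RL_mul n (fun z => g (yz z)) (fun z => Cmul c (monom z ss))). apply RL_yz; auto.
      apply Lau_mul. apply Lau_c. apply Lau_monom.
    + intros z Hz. pose proof (Hgs (yz z) (dec_region_yz n z Hz)) as Hser.
      unfold mseries_conv in Hser.
      assert (H1 := abs_reindex n (fun k => Cmul (w' (prodY (wY W) as_ k w)) (monom (yz z) k)) (g (yz z)) (fun ks => rev (zsub ss ks)) (fun js => zsub ss (rev js))).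
      specialize (H1 ltac:(intros k Hk; split; [rewrite length_rev, zsub_length; lia
                               | rewrite rev_involutive, zsub_inv; auto; lia])).
      specialize (H1 ltac:(intros k Hk; split; [rewrite zsub_length; rewrite ?length_rev; lia
                               | rewrite zsub_inv, rev_involutive; auto; rewrite length_rev; lia])).
      specialize (H1 Hser).
      pose proof (abs_add n _ _ _ _ (abs_scale n (Cmul c (monom z ss)) _ _ H1) (HFs z Hz)) as H3.
      eapply abs_ext. exact H3.
      intros ks Hks. cbv beta. simpl map. simpl sumC. simpl fst; simpl snd.
      rewrite (monom_shift_rev z ss ks) by (try apply dec_region_nz with n; auto;
         destruct Hz as [Hzl _]; lia).
      unfold yz. ring.
Qed.
End Main.


Theorem mainTheorem16 :
  forall (V : mosva_data) (W : lmod_data V),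
    is_Mobius_MOSVA V ->
    is_Mobius_left_module V W ->
    forall (us : list (mV V)) (w : wW W) (w' : wW W -> CC),
      (1 <= length us)%nat ->
      gdual (wgr W) w' ->
      exists f : list CC -> CC,
        rational_poles (length us) f /\
        forall z : list CC, dec_region (length us) z ->
          mseries_conv (length us) (fun ks => w' (prodYo_rev V W us ks w)) z (f z).
Proof.
  intros V W _ [HL _] us w w' Hn Hw'.
  destruct HL as (_ & HlinW & _ & _ & _ & _ & _ & _ & _ & _ & _ & _ & Hrat & _).
  destruct (prodYo_expand V W HlinW us) as [L [HLl HE]].
  destruct (combine V W Hrat w w' Hw' (length us) Hn L HLl) as [F [HF HFs]].
  exists F. split. apply RL_rational; auto.
  intros z Hz. unfold mseries_conv. eapply abs_ext. apply (HFs z Hz).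
  intros ks Hks. cbv beta. rewrite HE by auto.
  rewrite (linearC_sum w') by apply Hw'. rewrite map_map. f_equal. f_equal.
  apply map_ext. intro t. destruct Hw' as [[_ Hs] _]. rewrite Hs. auto.
Qed.
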